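(* Let $T$ be a finite full binary tree with $N\ge 2$ leaves and fringe thickness at most $2$, and let $m=\lceil\log_2 N\rceil$. For $\sigma\in\{0,1\}$ put $M=m-\sigma$, $c^{\sigma}_{\min}=(N-2^M)\sigma$ and $c^{\sigma}_{\max}=\lfloor (2N-2^M)/3\rfloor$. Then there exist $\sigma\in\{0,1\}$ and an integer $c$ with $c^\sigma_{\min}\le c\le c^\sigma_{\max}$ such that $T$ has exactly $2^M-N+c$ leaves at depth $M-1$, exactly $2N-2^M-3c$ leaves at depth $M$, exactly $2c$ leaves at depth $M+1$, and no other leaves. Conversely, for every such $(\sigma,c)$ these numbers are nonnegative and are the leaf-depth counts of some full binary tree $T_{\sigma,c}$.
   Context: A full binary tree is one in which every node is a leaf or has exactly two children. The fringe thickness of a finite tree is the maximum difference between the depths of any two of its leaves. *)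

(* Defs.v *)
From mathcomp Require Import all_boot all_order all_algebra.
Set Implicit Arguments. Unset Strict Implicit. Unset Printing Implicit Defensive.
Import Order.TTheory GRing.Theory Num.Theory.

Inductive tree : Type := Leaf | Node of tree & tree.

Fixpoint leaf_depths (t : tree) : seq nat :=
  match t with
  | Leaf => [:: 0]
  | Node l r => [seq d.+1 | d <- leaf_depths l ++ leaf_depths r]
  end.

Definition num_leaves (t : tree) : nat := size (leaf_depths t).

Definition fringe_thickness (t : tree) : nat :=
  \max_(i <- leaf_depths t) \max_(j <- leaf_depths t) (i - j).

Definition leaves_at (t : tree) (k : int) : nat :=
  count (fun d : nat => (Posz d == k)) (leaf_depths t).

(* Main.v *)
Require Import Defs.
From mathcomp Require Import all_boot all_order all_algebra.
From Stdlib Require Import Lia.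
Import Order.TTheory GRing.Theory Num.Theory.

Definition cnt (t : tree) (j : nat) : nat := count (pred1 j) (leaf_depths t).

Lemma leaves_at_Posz t j : leaves_at t (Posz j) = cnt t j.
Proof. by apply: eq_count => d; rewrite /= eqz_nat. Qed.

Lemma leaves_at_Negz t j : leaves_at t (Negz j) = 0.
Proof. by rewrite /leaves_at; elim: (leaf_depths t). Qed.

Lemma cnt_Node l r j : cnt (Node l r) j.+1 = cnt l j + cnt r j.
Proof.
rewrite /cnt /= count_map count_cat; congr (_ + _); apply: eq_count => d /=; by rewrite eqSS.
Qed.

Lemma cnt_Node0 l r : cnt (Node l r) 0 = 0.
Proof. by rewrite /cnt /= count_map; elim: (_ ++ _). Qed.

Lemma depths_nonnil t : leaf_depths t != [::].
Proof. by elim: t => //= l IHl r _; move: IHl; case: (leaf_depths l). Qed.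

Lemma kraft t H : all (fun d => d <= H) (leaf_depths t) ->
  sumn [seq 2 ^ (H - d) | d <- leaf_depths t] = 2 ^ H.
Proof.
elim: t H => [|l IHl r IHr] H /=; first by rewrite subn0 addn0.
case: H => [|H].
  move: (depths_nonnil l); case: (leaf_depths l) => //.
rewrite all_map -map_comp => hall.
have hal : all (fun d => d <= H) (leaf_depths l).
  by apply/allP => x hx; have := allP hall x; rewrite mem_cat hx /=; apply.
have har : all (fun d => d <= H) (leaf_depths r).
  by apply/allP => x hx; have := allP hall x; rewrite mem_cat hx orbT /=; apply.
rewrite map_cat sumn_cat.
have e : forall s, [seq (fun d => 2 ^ (H.+1 - d)) (succn x) | x <- s] = [seq 2 ^ (H - d) | d <- s].
  by move=> s; apply: eq_map => x /=; rewrite subSS.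
by rewrite !e IHl // IHr // expnS mul2n addnn.
Qed.

Lemma seq3 (s : seq nat) d : all (fun i => d <= i <= d.+2) s ->
  [/\ size s = count (pred1 d) s + count (pred1 d.+1) s + count (pred1 d.+2) s,
      sumn [seq 2 ^ (d.+2 - i) | i <- s] =
        4 * count (pred1 d) s + 2 * count (pred1 d.+1) s + count (pred1 d.+2) s &
      (forall j, j != d -> j != d.+1 -> j != d.+2 -> count (pred1 j) s = 0)].
Proof.
elim: s => [|x s IH] /=; first by [].
move=> /andP [hx /IH [h1 h2 h3]].
have e1 : (d == d.+1) = false by rewrite ltn_eqF.
have e2 : (d == d.+2) = false by rewrite ltn_eqF.
have e3 : (d.+1 == d.+2) = false by rewrite ltn_eqF.
have e4 : (d.+1 == d) = false by rewrite gtn_eqF.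
have e5 : (d.+2 == d) = false by rewrite gtn_eqF.
have e6 : (d.+2 == d.+1) = false by rewrite gtn_eqF.
have k0 : d.+2 - d = 2 by rewrite -minusE; lia.
have k1 : d.+2 - d.+1 = 1 by rewrite -minusE; lia.
have k2 : d.+2 - d.+2 = 0 by rewrite -minusE; lia.
have : x = d \/ x = d.+1 \/ x = d.+2.
  move: hx => /andP [/ssrnat.leP ha /ssrnat.leP hb]; lia.
case=> [->|[->|->]]; rewrite !eqxx ?e1 ?e2 ?e3 ?e4 ?e5 ?e6 /=;
  (split; [rewrite h1 -!plusE; simpl; lia | rewrite h2 ?k0 ?k1 ?k2 -?plusE -?multE; simpl; lia |
    move=> j hj1 hj2 hj3; rewrite h3 //]).
- by rewrite eq_sym (negbTE hj1).
- by rewrite eq_sym (negbTE hj2).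
- by rewrite eq_sym (negbTE hj3).
Qed.

Local Open Scope ring_scope.

Lemma shape T (D a b e : nat) : cnt T D = a -> cnt T D.+1 = b -> cnt T D.+2 = e ->
  (forall j, j != D -> j != D.+1 -> j != D.+2 -> cnt T j = 0%N) ->
  [/\ leaves_at T ((D.+1)%:Z - 1) = a, leaves_at T (D.+1)%:Z = b,
      leaves_at T ((D.+1)%:Z + 1) = e &
     forall k : int, k != (D.+1)%:Z - 1 -> k != (D.+1)%:Z -> k != (D.+1)%:Z + 1 ->
       leaves_at T k = 0%N].
Proof.
have E1 : (D.+1)%:Z - 1 = D%:Z by rewrite -addn1 PoszD addrK.
have E2 : (D.+1)%:Z + 1 = (D.+2)%:Z by rewrite -[(D.+2)%N]addn1 PoszD.
rewrite E1 E2 !leaves_at_Posz => ha hb he h0; split => //.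
case=> j; rewrite ?leaves_at_Negz // leaves_at_Posz !eqz_nat; exact: h0.
Qed.

Local Open Scope nat_scope.

Lemma build D a b e : 4 * a + 2 * b + 2 * e = 2 ^ D.+2 ->
  exists t, [/\ cnt t D = a, cnt t D.+1 = b, cnt t D.+2 = 2 * e &
    forall j, j != D -> j != D.+1 -> j != D.+2 -> cnt t j = 0].
Proof.
elim: D a b e => [|D IH] a b e.
  move=> h; have {}h : 4 * a + 2 * b + 2 * e = 4 by rewrite h.
  move: h; rewrite -!plusE -!multE => h.
  have : (a = 1 /\ b = 0 /\ e = 0) \/ (a = 0 /\ b = 2 /\ e = 0) \/
         (a = 0 /\ b = 1 /\ e = 1) \/ (a = 0 /\ b = 0 /\ e = 2) by lia.
  case=> [[-> [-> ->]]|[[-> [-> ->]]|[[-> [-> ->]]|[-> [-> ->]]]]].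
  - exists Leaf; split => // j h0 _ _; rewrite /cnt /= eq_sym (negbTE h0) //.
  - exists (Node Leaf Leaf); split => // j _ h1 _; rewrite /cnt /= eq_sym (negbTE h1) //.
  - exists (Node Leaf (Node Leaf Leaf)); split => // j _ h1 h2;
      rewrite /cnt /= eq_sym (negbTE h1) eq_sym (negbTE h2) //.
  - exists (Node (Node Leaf Leaf) (Node Leaf Leaf)); split => // j _ _ h2;
      rewrite /cnt /= eq_sym (negbTE h2) //.
rewrite expnS => h.
set P := 2 ^ D.+2 in h *.
have [a1 [b1 [e1 [ha hb he hs]]]] : exists a1 b1 e1,
    [/\ a1 <= a, b1 <= b, e1 <= e & 4 * a1 + 2 * b1 + 2 * e1 = P].
  have hP : P = 4 * 2 ^ D by rewrite /P !expnS mulnA.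
  move: h; rewrite hP; set Q := 2 ^ D => h.
  case: (leqP Q a) => [/ssrnat.leP hQa|/ssrnat.leP hQa].
    by exists Q, 0, 0; split => //; [apply/ssrnat.leP | rewrite -plusE -!multE; lia].
  case: (leqP (2 * Q - 2 * a) b) => [/ssrnat.leP hQb|/ssrnat.leP hQb].
    exists a, (2 * Q - 2 * a), 0; split => //; [apply/ssrnat.leP|];
      move: hQb h; rewrite -!plusE -!multE -!minusE; lia.
  exists a, b, (2 * Q - 2 * a - b); split => //; [apply/ssrnat.leP|];
    move: hQb h; rewrite -!plusE -!multE -!minusE; lia.
have [t1 [c10 c11 c12 c1z]] := IH _ _ _ hs.
have hs2 : 4 * (a - a1) + 2 * (b - b1) + 2 * (e - e1) = P.
  move: hs h => /=; move/ssrnat.leP: ha; move/ssrnat.leP: hb; move/ssrnat.leP: he.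
  rewrite -!plusE -!multE -!minusE; lia.
have [t2 [c20 c21 c22 c2z]] := IH _ _ _ hs2.
exists (Node t1 t2); rewrite !cnt_Node c10 c11 c12 c20 c21 c22; split.
- by rewrite subnKC.
- by rewrite subnKC.
- by rewrite -mulnDr subnKC.
case=> [|j] h0 h1 h2; first by rewrite cnt_Node0.
by rewrite cnt_Node c1z // c2z.
Qed.

Lemma tree_facts T : fringe_thickness T <= 2 -> exists d x y z,
  [/\ 0 < x, num_leaves T = x + y + z, 4 * x + 2 * y + z = 4 * 2 ^ d,
     [/\ cnt T d = x, cnt T d.+1 = y & cnt T d.+2 = z] &
     forall j, j != d -> j != d.+1 -> j != d.+2 -> cnt T j = 0].
Proof.
move=> hf.
set s := leaf_depths T.
have hex : exists n, n \in s.
  by move: (depths_nonnil T); rewrite -/s; case: s => // x l _; exists x; rewrite inE eqxx.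
case: (ex_minnP hex) => d hd hmin.
have hdiff : forall i j, i \in s -> j \in s -> i - j <= 2.
  move=> i j hi hj; apply: leq_trans hf.
  apply: leq_trans (leq_bigmax_seq (F := fun i => \max_(j <- s) (i - j)) i hi isT).
  exact: (leq_bigmax_seq (F := fun j => i - j) j hj isT).
have hall : all (fun i => d <= i <= d.+2) s.
  apply/allP => i hi; rewrite hmin //=.
  have := hdiff i d hi hd; move: (hmin i hi) => /ssrnat.leP h1 /ssrnat.leP h2.
  apply/ssrnat.leP; move: h2; rewrite -minusE; lia.
have [h1 h2 h3] := seq3 _ _ hall.
have hall2 : all (fun i => i <= d.+2) s by apply/allP=> i /(allP hall) /andP[].
have hk := kraft T _ hall2; rewrite h2 expnS expnS mulnA in hk.
exists d, (count (pred1 d) s), (count (pred1 d.+1) s), (count (pred1 d.+2) s).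
split => //.
rewrite -has_count; apply/hasP; exists d => //=.
Qed.

Local Open Scope ring_scope.

Lemma E2 (N : nat) : (2:int) * N%:Z = (2 * N)%N%:Z.
Proof. by rewrite PoszM. Qed.

Lemma E3 (N : nat) : (3:int) * N%:Z = (3 * N)%N%:Z.
Proof. by rewrite PoszM. Qed.

Lemma pow2 (M : nat) : (2:int) ^+ M = (2 ^ M)%N%:Z.
Proof. by rewrite -natz natrX natz. Qed.

Lemma ieq1 (a A N c : nat) : (a + N = A + c)%N -> a%:Z = A%:Z - N%:Z + c%:Z.
Proof. by move=> h; apply: (addIr (Posz N)); rewrite addrAC subrK -!PoszD h. Qed.

Lemma ieq2 (b A N c : nat) : (b + A + 3 * c = 2 * N)%N ->
  b%:Z = 2 * N%:Z - A%:Z - 3 * c%:Z.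
Proof. by move=> h; rewrite E2 E3 -h !PoszD addrAC addrK addrK. Qed.

Lemma ieq3 (e c : nat) : (e = 2 * c)%N -> e%:Z = 2 * c%:Z.
Proof. by move=> ->; rewrite E2. Qed.

Lemma bmin (A N c sigma : nat) : (sigma <= 1)%N -> (sigma = 1 -> N <= A + c)%N ->
  (N%:Z - A%:Z) * sigma%:Z <= c%:Z.
Proof.
case: sigma => [|[|//]] _ h; first by rewrite mulr0.
by rewrite mulr1 lerBlDr -PoszD lez_nat addnC h.
Qed.

Lemma bmax (A N c : nat) : (A <= 2 * N)%N -> (3 * c <= 2 * N - A)%N ->
  c%:Z <= ((2 * N%:Z - A%:Z) %/ 3)%Z.
Proof.
move=> h1 h2; rewrite E2 subzn // divz_nat lez_nat leq_divRL // mulnC //.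
Qed.

Lemma bmin_inv (A N sigma : nat) (c : int) : (sigma <= 1)%N -> (sigma = 1 -> A <= N)%N ->
  (N%:Z - A%:Z) * sigma%:Z <= c -> exists c' : nat, c = c'%:Z /\ (sigma = 1 -> N <= A + c')%N.
Proof.
case: sigma => [|[|//]] _ h.
  rewrite mulr0; case: c => [c'|//] _; exists c'; split => //.
rewrite mulr1 => hc.
have h0 : 0 <= c by apply: le_trans hc; rewrite subr_ge0 lez_nat h.
case: c hc h0 => [c'|//] hc _; exists c'; split => // _.
by move: hc; rewrite lerBlDr -PoszD lez_nat addnC.
Qed.

Lemma bmax_inv (A N c : nat) : (A <= 2 * N)%N -> c%:Z <= ((2 * N%:Z - A%:Z) %/ 3)%Z ->
  (3 * c <= 2 * N - A)%N.
Proof.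
by move=> h1; rewrite E2 subzn // divz_nat lez_nat leq_divRL // mulnC.
Qed.

Ltac nlia := repeat match goal with H : is_true (_ <= _)%N |- _ => apply (elimT ssrnat.leP) in H end;
  try apply/ssrnat.leP;
  repeat match goal with H : context[addn] |- _ => rewrite -plusE in H
    | H : context[muln] |- _ => rewrite -multE in H
    | H : context[subn] |- _ => rewrite -minusE in H end;
  rewrite -?plusE -?multE -?minusE; lia.

Theorem lemma7 (N : nat) (hN : (2 <= N)%N) :
  let m := up_log 2 N in
  let M (sigma : nat) : nat := (m - sigma)%N in
  let cmin (sigma : nat) : int := (N%:Z - 2 ^+ M sigma) * sigma%:Z in
  let cmax (sigma : nat) : int := ((2 * N%:Z - 2 ^+ M sigma) %/ 3)%Z in
  (forall T : tree, num_leaves T = N -> (fringe_thickness T <= 2)%N ->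
     exists (sigma : nat) (c : int),
       [/\ (sigma <= 1)%N, cmin sigma <= c <= cmax sigma &
         [/\ (leaves_at T ((M sigma)%:Z - 1))%:Z = 2 ^+ M sigma - N%:Z + c,
           (leaves_at T (M sigma)%:Z)%:Z = 2 * N%:Z - 2 ^+ M sigma - 3 * c,
           (leaves_at T ((M sigma)%:Z + 1))%:Z = 2 * c
         & forall k : int,
             k != (M sigma)%:Z - 1 -> k != (M sigma)%:Z -> k != (M sigma)%:Z + 1 ->
             leaves_at T k = 0%N]])
  /\
  (forall (sigma : nat) (c : int), (sigma <= 1)%N -> cmin sigma <= c <= cmax sigma ->
     [/\ 0 <= 2 ^+ M sigma - N%:Z + c,
         0 <= 2 * N%:Z - 2 ^+ M sigma - 3 * c,
         0 <= 2 * c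
       & exists T : tree,
           [/\ (leaves_at T ((M sigma)%:Z - 1))%:Z = 2 ^+ M sigma - N%:Z + c,
               (leaves_at T (M sigma)%:Z)%:Z = 2 * N%:Z - 2 ^+ M sigma - 3 * c,
               (leaves_at T ((M sigma)%:Z + 1))%:Z = 2 * c
             & forall k : int,
                 k != (M sigma)%:Z - 1 -> k != (M sigma)%:Z -> k != (M sigma)%:Z + 1 ->
                 leaves_at T k = 0%N]]).
Proof.
cbv beta zeta.
have [hlo hhi] : (2 ^ (up_log 2 N).-1 < N /\ N <= 2 ^ up_log 2 N)%N.
  by apply/andP; apply: up_log_bounds.
have hm0 : (0 < up_log 2 N)%N by rewrite up_log_gt0.
split.
- move=> T hNT hf.
  have [d [x [y [z [hx hN' hk [cx cy cz] c0]]]]] := tree_facts T hf.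
  rewrite hNT in hN'.
  have hP : (0 < 2 ^ d)%N by rewrite expn_gt0.
  case: (eqVneq (y + z)%N 0%N) => hyz.
  + have y0 : y = 0%N by nlia.
    have z0 : z = 0%N by nlia.
    have xP : x = (2 ^ d)%N by nlia.
    have [D hD] : exists D, d = D.+1.
      case: d hk hP xP {c0 cx cy cz} => [|D] hk hP xP; last by exists D.
      by move: hN; rewrite hN' xP y0 z0.
    subst d.
    have hm : up_log 2 N = D.+1 by rewrite hN' y0 z0 xP addn0 addn0 up_expnK.
    exists 0%N, (0%N)%:Z; rewrite hm subn0 pow2.
    have q0 : cnt T D = 0%N.
      by apply: c0; rewrite neq_ltn ?ltnSn // ltnW // ltnW.
    have q3 : forall j, j != D -> j != D.+1 -> j != D.+2 -> cnt T j = 0%N.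
      move=> j h1 h2 h3; case: (eqVneq j D.+3) => [->|h4]; first by rewrite cz.
      exact: c0.
    have [s1 s2 s3 s4] := shape T D 0 x 0 q0 cx (etrans cy y0) q3.
    rewrite s1 s2 s3; split => //.
      by apply/andP; split; [apply: bmin => //| apply: bmax; nlia].
    split => //.
    - by apply: ieq1; nlia.
    - by apply: ieq2; nlia.
  + have hyz' : (0 < y + z)%N by rewrite lt0n.
    have [c hc] : exists c, c = (2 * 2 ^ d - 2 * x - y)%N by eexists.
    have zc : z = (2 * c)%N by nlia.
    have hNlo : (2 ^ d < N)%N by nlia.
    have e1 : (2 ^ d.+1 = 2 * 2 ^ d)%N by rewrite expnS.
    have e2 : (2 ^ d.+2 = 4 * 2 ^ d)%N by rewrite !expnS mulnA.
    have [s1 s2 s3 s4] := shape T d x y z cx cy cz c0.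
    case: (leqP N (2 * 2 ^ d)) => hN2.
    * have hm : up_log 2 N = d.+1 by apply: up_log_eq => //; rewrite e1 hNlo hN2.
      exists 0%N, c%:Z; rewrite hm subn0 pow2 s1 s2 s3 e1; split => //.
        by apply/andP; split; [apply: bmin => // | apply: bmax; nlia].
      split; [apply: ieq1; nlia | apply: ieq2; nlia | apply: ieq3; nlia | exact: s4].
    * have hm : up_log 2 N = d.+2 by apply: up_log_eq => //; rewrite e1 e2 hN2 /=; nlia.
      have hsub : (d.+2 - 1 = d.+1)%N by rewrite subn1.
      exists 1%N, c%:Z; rewrite hm hsub pow2 s1 s2 s3 e1; split => //.
        by apply/andP; split; [apply: bmin => // _; nlia | apply: bmax; nlia].
      split; [apply: ieq1; nlia | apply: ieq2; nlia | apply: ieq3; nlia | exact: s4].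
- move=> sigma c hs /andP [hc1 hc2].
  set m := up_log 2 N in hlo hhi hm0 hc1 hc2 *.
  have hA1 : sigma = 1%N -> (2 ^ (m - sigma) <= N)%N.
    by move=> ->; rewrite subn1 ltnW.
  have hA2 : (2 ^ (m - sigma) <= 2 * N)%N.
    apply: leq_trans (leq_pexp2l (isT : (0 < 2)%N) (leq_subr sigma m)) _.
    rewrite -(prednK hm0) expnS leq_mul2l /= ltnW //.
  have hA0 : sigma = 0%N -> (N <= 2 ^ (m - sigma))%N by move=> ->; rewrite subn0.
  rewrite pow2 in hc1 hc2 *.
  have [c' [hcc hc']] := bmin_inv _ _ _ _ hs hA1 hc1.
  subst c; have h3 := bmax_inv _ _ _ hA2 hc2.
  set A := (2 ^ (m - sigma))%N in hA0 hA1 hA2 hc' h3 *.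
  have hNA : (N <= A + c')%N.
    have : sigma = 0%N \/ sigma = 1%N by nlia.
    case=> hs'; [move: (hA0 hs') => ?; nlia | exact: hc'].
  have E1 := ieq1 (A + c' - N)%N A N c' ltac:(nlia).
  have E2 := ieq2 (2 * N - A - 3 * c')%N A N c' ltac:(nlia).
  have E3 := ieq3 (2 * c')%N c' erefl.
  rewrite -E1 -E2 -E3; split => //.
  case hMs: (m - sigma)%N => [|D].
  + have hA : A = 1%N by rewrite /A hMs.
    have hm1 : m = 1%N.
      have : sigma = 0%N \/ sigma = 1%N by nlia.
      by case=> hs'; move: hMs; rewrite hs'; nlia.
    rewrite hm1 /= in hlo hhi.
    have h1 : (A + c' - N)%N = 0%N by nlia.
    have h2 : (2 * N - A - 3 * c')%N = 0%N by nlia.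
    have h4 : c' = 1%N by nlia.
    rewrite h1 h2 h4; exists (Node Leaf Leaf); split => //.
    case=> [j|j] k1 k2 k3; last by rewrite leaves_at_Negz.
    rewrite leaves_at_Posz /cnt /=.
    have hj : (1 == j) = false by apply/negbTE; move: k3; apply: contra => /eqP <-.
    by rewrite hj.
  + have [t [t0 t1 t2 tz]] := build D (A + c' - N) (2 * N - A - 3 * c') c'
      ltac:(move: hNA h3 hA2; rewrite /A hMs !expnS; move=> ? ? ?; nlia).
    have [s1 s2 s3 s4] := shape t D _ _ _ t0 t1 t2 tz.
    by exists t; rewrite s1 s2 s3.
Qed.
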